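(* Let $H$ be a multi-hypergraph, $\mathcal{M}$ a matroid and $\gamma\colon E(H)\to E(\mathcal{M})$. Let $M$ be a maximal independent matching in $(H,\gamma)$ of size $\ell$, and suppose there exists $e\in E(H)$ with $\gamma(e)\notin\mathrm{span}(\gamma(M))$. Then there exist an integer $k>0$ and a collection $X\subseteq E(H)$ of $k+1$ hyperedges such that the subhypergraph of $H$ formed by the hyperedges in $X$ and their vertices is connected, and $H-V(X)$ (with the labelling $\gamma$ restricted to its hyperedges) contains a maximal independent matching of size $\ell-k$.
   Context: A multi-hypergraph $H=(V,E)$ consists of a finite set $V$ and a multiset $E$ of non-empty subsets of $V$ (hyperedges); distinct copies of the same subset are distinct hyperedges and may receive different labels. For $U\subseteq V(H)$, $H-U$ has vertex set $V(H)\setminus U$ and all hyperedges of $H$ disjoint from $U$. For $X\subseteq E(H)$, $V(X)=\bigcup_{e\in X}e$. A multi-hypergraph is connected if for every partition of its vertex set into non-empty parts $A,B$ some hyperedge meets both $A$ and $B$. $\mathrm{span}$ denotes the closure operator of the matroid $\mathcal{M}$. Given $\gamma\colon E(H)\to E(\mathcal{M})$, an independent matching in $(H,\gamma)$ is a collection $M$ of pairwise vertex-disjoint hyperedges of $H$ with pairwise distinct labels such that $\gamma(M)$ is an independent set of $\mathcal{M}$ (the empty collection is an independent matching). An independent matching $M$ is inclusion-wise maximal if no independent matching $M'$ satisfies $M\subsetneq M'$. It is maximal if there is no independent matching $M'$ in $(H,\gamma)$ with $\mathrm{span}(\gamma(M'))=\mathrm{span}(\gamma(M))$ that is not inclusion-wise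 maximal. *)

(* Defs.v *)
From mathcomp Require Import all_boot.
Set Implicit Arguments. Unset Strict Implicit. Unset Printing Implicit Defensive.

Record is_matroid (S : finType) (indep : {set S} -> bool) : Prop := {
  matroid_indep0 : indep set0;
  matroid_hered : forall A B : {set S}, A \subset B -> indep B -> indep A;
  matroid_exch : forall A B : {set S}, indep A -> indep B -> #|A| < #|B| ->
     exists2 x, x \in B :\: A & indep (x |: A)
}.

Definition mrank (S : finType) (indep : {set S} -> bool) (A : {set S}) : nat :=
  \max_(B in powerset A | indep B) #|B|.

Definition span (S : finType) (indep : {set S} -> bool) (A : {set S}) : {set S} :=
  [set x | mrank indep (x |: A) == mrank indep A].

(* A multi-hypergraph: vertex type V, hyperedge index type E (distinct indices
   may carry the same vertex set), incidence inc : E -> {set V}. *)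

Definition Vof (V E : finType) (inc : E -> {set V}) (X : {set E}) : {set V} :=
  \bigcup_(e in X) inc e.

Definition del_edges (V E : finType) (inc : E -> {set V}) (U : {set V}) : {set E} :=
  [set e | [disjoint inc e & U]].

Definition indep_matching (V E S : finType) (inc : E -> {set V})
  (indep : {set S} -> bool) (gamma : E -> S) (D : {set E}) (M : {set E}) : Prop :=
  [/\ M \subset D,
      (forall e f, e \in M -> f \in M -> e != f -> [disjoint inc e & inc f]),
      {in M &, injective gamma} &
      indep (gamma @: M)].

Definition incl_maximal (V E S : finType) (inc : E -> {set V})
  (indep : {set S} -> bool) (gamma : E -> S) (D : {set E}) (M : {set E}) : Prop :=
  indep_matching inc indep gamma D M /\
  forall M', indep_matching inc indep gamma D M' -> ~ (M \proper M').

Definition maximal_matching (V E S : finType) (inc : E -> {set V})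
  (indep : {set S} -> bool) (gamma : E -> S) (D : {set E}) (M : {set E}) : Prop :=
  indep_matching inc indep gamma D M /\
  forall M', indep_matching inc indep gamma D M' ->
    span indep (gamma @: M') = span indep (gamma @: M) ->
    incl_maximal inc indep gamma D M'.

Definition connected_hg (V E : finType) (inc : E -> {set V}) (W : {set V}) (X : {set E}) : Prop :=
  forall A B : {set V}, A != set0 -> B != set0 -> [disjoint A & B] -> A :|: B = W ->
    exists2 e, e \in X & (inc e :&: A != set0) && (inc e :&: B != set0).

(* Main.v *)
Require Import Defs.
From mathcomp Require Import all_boot.
From Stdlib Require Import Classical_Prop.
Set Implicit Arguments. Unset Strict Implicit. Unset Printing Implicit Defensive.

Lemma setU1_mem (T : finType) (a : T) (A : {set T}) : a \in A -> a |: A = A.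
Proof. by move=> h; apply/setUidPr; rewrite sub1set. Qed.

Lemma rank_le (S : finType) (indep : {set S} -> bool) (A : {set S}) :
  mrank indep A <= #|A|.
Proof.
apply/bigmax_leqP => B /andP [hB _]; rewrite powersetE in hB.
exact: subset_leq_card.
Qed.

Lemma rank_ge (S : finType) (indep : {set S} -> bool) (A B : {set S}) :
  B \subset A -> indep B -> #|B| <= mrank indep A.
Proof.
move=> hBA hB; rewrite /mrank.
by apply: (@leq_bigmax_cond _ (fun B => (B \in powerset A) && indep B) (fun B => #|B|)); rewrite powersetE hBA.
Qed.

Lemma rank_indep (S : finType) (indep : {set S} -> bool) (A : {set S}) :
  indep A -> mrank indep A = #|A|.
Proof. by move=> hA; apply/eqP; rewrite eqn_leq rank_le rank_ge. Qed.

Lemma rank_eq_indep (S : finType) (indep : {set S} -> bool) (hmat : is_matroid indep) (A : {set S}) :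
  mrank indep A = #|A| -> indep A.
Proof.
rewrite /mrank.
have h0 : 0 < #|[pred B | (B \in powerset A) && indep B]|.
  apply/card_gt0P; exists set0; rewrite inE powersetE sub0set /=.
  exact: matroid_indep0 hmat.
case: (eq_bigmax_cond (fun B : {set S} => #|B|) h0) => B.
rewrite inE powersetE => /andP [hBA hB] ->.
move=> hc; have: B == A by rewrite eqEcard hBA hc leqnn.
by move/eqP <-.
Qed.

Lemma spanP (S : finType) (indep : {set S} -> bool) (hmat : is_matroid indep) (I : {set S}) x :
  indep I -> (x \in span indep I) = (x \in I) || ~~ indep (x |: I).
Proof.
move=> hI; rewrite /span inE.
case: (boolP (x \in I)) => hx /=.
  by rewrite (setU1_mem hx) eqxx.
rewrite (rank_indep hI).
have hc : #|x |: I| = #|I|.+1 by rewrite cardsU1 hx.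
case: (boolP (indep (x |: I))) => hxI /=.
  by rewrite (rank_indep hxI) hc; apply/negbTE; rewrite neq_ltn ltnSn orbT.
have h1 : #|I| <= mrank indep (x |: I) by apply: rank_ge => //; apply: subsetUr.
have h2 := rank_le indep (x |: I).
rewrite hc in h2.
have h3 : mrank indep (x |: I) != #|I|.+1.
  by apply/negP => /eqP h; apply: (negP hxI); apply: (rank_eq_indep hmat); rewrite h hc.
rewrite eqn_leq h1 andbT.
by move: h2; rewrite leq_eqVlt (negbTE h3) /= ltnS.
Qed.

Lemma span_sub (S : finType) (indep : {set S} -> bool) (I : {set S}) x :
  x \in I -> x \in span indep I.
Proof. by move=> hx; rewrite /span inE (setU1_mem hx). Qed.

Lemma hered (S : finType) (indep : {set S} -> bool) (hmat : is_matroid indep) (A B : {set S}) :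
  A \subset B -> indep B -> indep A.
Proof. exact: matroid_hered. Qed.

Lemma span_mono (S : finType) (indep : {set S} -> bool) (hmat : is_matroid indep) (A B : {set S}) x :
  A \subset B -> indep B -> x \in span indep A -> x \in span indep B.
Proof.
move=> hAB hB; have hA := hered hmat hAB hB.
rewrite (spanP hmat _ hA) (spanP hmat _ hB) => /orP [hx|hx].
  by rewrite (subsetP hAB _ hx).
case: (boolP (x \in B)) => //= _; apply: contra hx => h.
by apply: (hered hmat _ h); apply: setUS.
Qed.

Lemma notspan_indep (S : finType) (indep : {set S} -> bool) (hmat : is_matroid indep) (I : {set S}) x :
  indep I -> x \notin span indep I -> (x \notin I) && indep (x |: I).
Proof. by move=> hI; rewrite (spanP hmat _ hI) negb_or negbK. Qed.

Lemma card_le_span (S : finType) (indep : {set S} -> bool) (hmat : is_matroid indep) (I J : {set S}) :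
  indep I -> indep J -> J \subset span indep I -> #|J| <= #|I|.
Proof.
move=> hI hJ hsub; rewrite leqNgt; apply/negP => hlt.
case: (matroid_exch hmat hI hJ hlt) => x /setDP [hxJ hxI] hxi.
have := subsetP hsub _ hxJ; rewrite (spanP hmat _ hI) (negbTE hxI) hxi.
by [].
Qed.

Lemma span_eq (S : finType) (indep : {set S} -> bool) (hmat : is_matroid indep) (I J : {set S}) :
  indep I -> indep J -> J \subset span indep I -> #|I| <= #|J| -> span indep I = span indep J.
Proof.
move=> hI hJ hsub hle.
have hc : #|J| = #|I| by apply/eqP; rewrite eqn_leq hle (card_le_span hmat hI hJ hsub).
have sub1 : span indep I \subset span indep J.
  apply/subsetP => x hx; apply/negPn/negP => hxJ.
  case/andP: (notspan_indep hmat hJ hxJ) => hxnJ hxi.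
  have hlt : #|I| < #|x |: J| by rewrite cardsU1 hxnJ hc.
  case: (matroid_exch hmat hI hxi hlt) => y /setDP [hy hyI] hyi.
  have hyns : y \notin span indep I by rewrite (spanP hmat _ hI) negb_or hyI hyi.
  case/setU1P: hy => [hyx|hyJ].
    by move: hyns; rewrite hyx hx.
  by move: hyns; rewrite (subsetP hsub _ hyJ).
apply/eqP; rewrite eqEsubset sub1 /=.
apply/subsetP => x hx; apply/negPn/negP => hxI.
case/andP: (notspan_indep hmat hI hxI) => hxnI hxi.
have hlt : #|J| < #|x |: I| by rewrite cardsU1 hxnI hc.
case: (matroid_exch hmat hJ hxi hlt) => y /setDP [hy hyJ] hyi.
have hyns : y \notin span indep J by rewrite (spanP hmat _ hJ) negb_or hyJ hyi.
case/setU1P: hy => [hyx|hyI].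
  by move: hyns; rewrite hyx hx.
by move: hyns; rewrite (subsetP sub1 _ (span_sub _ hyI)).
Qed.

Lemma augment (S : finType) (indep : {set S} -> bool) (hmat : is_matroid indep) n :
  forall C K : {set S}, indep C -> indep K -> #|K| - #|C| <= n ->
  exists2 C', indep C' & [&& C \subset C', C' \subset C :|: K & #|K| <= #|C'|].
Proof.
elim: n => [|n IH] C K hC hK hn.
  exists C => //; rewrite subxx subsetUl /=; by rewrite -subn_eq0 -leqn0.
case: (leqP #|K| #|C|) => hle.
  by exists C => //; rewrite subxx subsetUl.
case: (matroid_exch hmat hC hK hle) => x /setDP [hxK hxC] hxi.
have hn' : #|K| - #|x |: C| <= n.
  rewrite cardsU1 hxC add1n subnS; move: hn; rewrite -subn_gt0 in hle.
  by case: (#|K| - #|C|) hle.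
case: (IH _ _ hxi hK hn') => C' hC' /and3P [h1 h2 h3].
exists C' => //; apply/and3P; split => //.
  by apply: subset_trans h1; apply: subsetUr.
apply: (subset_trans h2); apply/subsetP => y; rewrite !inE.
by case/orP => [/orP [/eqP ->|->]|->]; rewrite ?hxK ?orbT.
Qed.

Lemma exch_circ (S : finType) (indep : {set S} -> bool) (hmat : is_matroid indep) (K N : {set S}) y :
  indep K -> N \subset K -> y \in span indep K -> y \notin span indep N ->
  exists z, [/\ z \in K, z \notin N, indep (y |: (K :\ z)) & y \notin K :\ z].
Proof.
move=> hK hNK hyK hyN.
have hN := hered hmat hNK hK.
case: (boolP (y \in K)) => hyk.
  exists y; split => //.
  - by apply: contra hyN; apply: span_sub.
  - by rewrite setD1K.
  - by rewrite !inE eqxx.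
case/andP: (notspan_indep hmat hN hyN) => hyn hyNi.
have hlt : #|N| < #|K|.
  rewrite ltn_neqAle (subset_leq_card hNK) andbT; apply/negP => /eqP hc.
  have : N == K by rewrite eqEcard hNK hc leqnn.
  by move/eqP => hNK'; move: hyN; rewrite hNK' hyK.
have hdep : ~~ indep (y |: K) by move: hyK; rewrite (spanP hmat _ hK) (negbTE hyk).
case: (augment hmat (n := #|K| - #|y |: N|) hyNi hK (leqnn _)) => C' hC' /and3P [h1 h2 h3].
have h2' : C' \subset y |: K.
  apply: (subset_trans h2); apply/subsetP => w; rewrite !inE.
  case/orP => [/orP [->//|/(subsetP hNK) ->]|->]; by rewrite orbT.
have [z hzK hzC] : exists2 z, z \in K & z \notin C'.
  apply/exists_inP; rewrite -negb_forall_in; apply/negP => /forall_inP hall.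
  have : y |: K \subset C'.
    apply/subsetP => w; rewrite !inE; case/orP => [/eqP ->|/hall //].
    by apply: (subsetP h1); rewrite !inE eqxx.
  move=> hsubC; have eC : C' = y |: K by apply/eqP; rewrite eqEsubset h2' hsubC.
  by move: hC'; rewrite eC (negbTE hdep).
exists z; split => //.
- apply: contra hzC => hzN; apply: (subsetP h1); by rewrite !inE hzN orbT.
- have hsub : C' \subset y |: (K :\ z).
    apply/subsetP => w hw; have := subsetP h2' _ hw; rewrite !inE.
    case/orP => [->//|hwK]; rewrite hwK andbT; apply/orP; right; apply/eqP => hwz; move: hzC; by rewrite -hwz hw.
  suff <- : C' = y |: (K :\ z) by [].
  apply/eqP; rewrite eqEcard hsub /=.
  apply: (leq_trans _ h3); rewrite cardsU1 !inE negb_and hyk orbT /=.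
  by rewrite (cardsD1 z K) hzK.
- by rewrite !inE negb_and hyk orbT.
Qed.

Lemma span_union (S : finType) (indep : {set S} -> bool) (hmat : is_matroid indep) (I J : {set S}) :
  indep I -> indep J -> span indep I = span indep J -> forall n (Z : {set S}), #|Z| <= n ->
  indep (I :|: Z) -> [disjoint I & Z] ->
  [/\ indep (J :|: Z), [disjoint J & Z] & span indep (I :|: Z) = span indep (J :|: Z)].
Proof.
move=> hI hJ hIJ.
have hcIJ : #|I| = #|J|.
  apply/eqP; rewrite eqn_leq; apply/andP; split.
  - by apply: (card_le_span hmat hJ hI); apply/subsetP => x hx; rewrite -hIJ; apply: span_sub.
  - by apply: (card_le_span hmat hI hJ); apply/subsetP => x hx; rewrite hIJ; apply: span_sub.
elim => [|n IH] Z hZ hIZ hdis.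
  move: hZ; rewrite leqn0 cards_eq0 => /eqP ->; rewrite !setU0 hIJ; split => //.
  by rewrite -setI_eq0 setI0.
case: (set_0Vmem Z) => [->|[y hy]].
  rewrite !setU0 hIJ; split => //; by rewrite -setI_eq0 setI0.
set Z0 := Z :\ y.
have hZ0 : #|Z0| <= n by move: hZ; rewrite (cardsD1 y Z) hy.
have eZ : Z = y |: Z0 by rewrite setD1K.
have hIZ0 : indep (I :|: Z0).
  by apply: (hered hmat _ hIZ); apply: setUS; apply: subsetDl.
have hdis0 : [disjoint I & Z0].
  by apply: (disjointWr _ hdis); apply: subsetDl.
case: (IH Z0 hZ0 hIZ0 hdis0) => hJZ0 hdisJ0 hsp0.
have hyZ0 : y \notin Z0 by rewrite !inE eqxx.
have hyI : y \notin I by move: hdis; rewrite disjoint_sym => /disjointFr ->.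
have eIZ : I :|: Z = y |: (I :|: Z0) by rewrite eZ setUCA.
have eJZ : J :|: Z = y |: (J :|: Z0) by rewrite eZ setUCA.
have hyns : y \notin span indep (I :|: Z0).
  rewrite (spanP hmat _ hIZ0) negb_or -eIZ hIZ andbT inE negb_or hyI.
  by rewrite hyZ0.
rewrite hsp0 in hyns; case/andP: (notspan_indep hmat hJZ0 hyns) => hyJZ0 hJZi.
have hyJ : y \notin J by apply: contra hyJZ0 => h; rewrite inE h.
split.
- by rewrite eJZ.
- rewrite eZ disjoints_subset; apply/subsetP => w hw; rewrite !inE negb_or; apply/andP; split.
    by apply/eqP => hwy; move: hyJ; rewrite -hwy hw.
  by move: hdisJ0; rewrite disjoints_subset => /subsetP /(_ _ hw); rewrite /Z0 !inE.
- rewrite eIZ eJZ; apply: span_eq => //; first by rewrite -eIZ.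
  + apply/subsetP => w; rewrite in_setU1; case/orP => [/eqP ->|].
      by apply: span_sub; rewrite !inE eqxx.
    rewrite inE; case/orP => hw.
      apply: (span_mono hmat (A := I)); first by apply/subsetP=> u hu; rewrite !inE hu !orbT.
        by rewrite -eIZ.
      by rewrite hIJ; apply: span_sub.
    by apply: span_sub; rewrite in_setU1 in_setU hw !orbT.
  + rewrite !cardsU1 hyJZ0.
    have -> : y \notin I :|: Z0 by rewrite inE negb_or hyI hyZ0.
    rewrite !add1n ltnS !cardsU.
    rewrite (disjoint_setI0 hdis0) (disjoint_setI0 hdisJ0) hcIJ //.
Qed.

Lemma imset_D1_inj (aT rT : finType) (g : aT -> rT) (Q : {set aT}) x :
  {in Q &, injective g} -> x \in Q -> g @: (Q :\ x) = (g @: Q) :\ g x.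
Proof.
move=> hinj hx; apply/setP => y; rewrite !inE; apply/imsetP/andP.
  case=> u hu hyu; subst y; move: hu; rewrite !inE => /andP [hux huQ]; split.
    by apply: contra hux => /eqP h; apply/eqP; apply: hinj.
  by apply: imset_f.
case=> hy /imsetP [u huQ hyu]; exists u => //; rewrite !inE huQ andbT.
by apply: contra hy => /eqP hux; rewrite hyu hux.
Qed.

Lemma conn_aux (V E : finType) (inc : E -> {set V}) e (X' : {set E}) (A B : {set V}) :
  (forall x, x \in X' -> ~~ [disjoint inc x & inc e]) ->
  B != set0 -> A :|: B = Vof inc (e |: X') -> [disjoint A & B] -> inc e :&: B = set0 ->
  exists2 x, x \in e |: X' & (inc x :&: A != set0) && (inc x :&: B != set0).
Proof.
move=> hX hB hAB hdis heB.
case/set0Pn: hB => v hv.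
have : v \in Vof inc (e |: X') by rewrite -hAB inE hv orbT.
case/bigcupP => x; rewrite in_setU1 => /orP [/eqP ->|hx] hvx.
  by move: heB => /setP /(_ v); rewrite !inE hvx hv.
exists x; first by rewrite in_setU1 hx orbT.
have := hX _ hx; rewrite -setI_eq0 => /set0Pn [u]; rewrite inE => /andP [hux hue].
have huV : u \in Vof inc (e |: X').
  by apply/bigcupP; exists e; rewrite ?in_setU1 ?eqxx.
move: huV; rewrite -hAB inE => /orP [huA|huB].
  apply/andP; split; apply/set0Pn; [exists u | exists v]; by rewrite inE ?hux ?huA ?hvx ?hv.
by move: heB => /setP /(_ u); rewrite !inE hue huB.
Qed.

Lemma conn_star (V E : finType) (inc : E -> {set V}) e (X' : {set E}) :
  (forall x, x \in X' -> ~~ [disjoint inc x & inc e]) ->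
  connected_hg inc (Vof inc (e |: X')) (e |: X').
Proof.
move=> hX A B hA hB hdis hAB.
case: (eqVneq (inc e :&: B) set0) => heB.
  exact: conn_aux.
case: (eqVneq (inc e :&: A) set0) => heA.
  have hBA : B :|: A = Vof inc (e |: X') by rewrite setUC.
  case: (conn_aux hX hA hBA _ heA); first by rewrite disjoint_sym.
  by move=> x hx /andP [h1 h2]; exists x => //; rewrite h1 h2.
by exists e; rewrite ?in_setU1 ?eqxx ?heA ?heB.
Qed.

Definition is_matching (V E : finType) (inc : E -> {set V}) (Q : {set E}) :=
  forall e f, e \in Q -> f \in Q -> e != f -> [disjoint inc e & inc f].

Lemma match_union (V E : finType) (inc : E -> {set V}) (A B : {set E}) :
  is_matching inc A -> is_matching inc B ->
  (forall a b, a \in A -> b \in B -> [disjoint inc a & inc b]) ->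
  is_matching inc (A :|: B).
Proof.
move=> hA hB hAB x y; rewrite !inE => /orP [hx|hx] /orP [hy|hy] hxy.
- exact: hA.
- exact: hAB.
- by rewrite disjoint_sym; apply: hAB.
- exact: hB.
Qed.

Lemma match_sub (V E : finType) (inc : E -> {set V}) (A B : {set E}) :
  A \subset B -> is_matching inc B -> is_matching inc A.
Proof. by move=> hAB hB x y hx hy; apply: hB; apply: (subsetP hAB). Qed.

Lemma inj_union (aT rT : finType) (g : aT -> rT) (A B : {set aT}) :
  {in A &, injective g} -> {in B &, injective g} -> [disjoint g @: A & g @: B] ->
  {in A :|: B &, injective g}.
Proof.
move=> hA hB hd x y; rewrite !inE => /orP [hx|hx] /orP [hy|hy] hxy.
- exact: hA.
- have : g x \in g @: A :&: g @: B by rewrite inE imset_f // hxy imset_f.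
  by rewrite (disjoint_setI0 hd) inE.
- have : g y \in g @: A :&: g @: B by rewrite inE imset_f // -hxy imset_f.
  by rewrite (disjoint_setI0 hd) inE.
- exact: hB.
Qed.

Lemma inj_sub (aT rT : finType) (g : aT -> rT) (A B : {set aT}) :
  A \subset B -> {in B &, injective g} -> {in A &, injective g}.
Proof. by move=> hAB hB x y hx hy; apply: hB; apply: (subsetP hAB). Qed.

Lemma inj_U1 (aT rT : finType) (g : aT -> rT) (B : {set aT}) f :
  {in B &, injective g} -> g f \notin g @: B -> {in f |: B &, injective g}.
Proof.
move=> hB hf; apply: inj_union => //.
  by move=> x y; rewrite !inE => /eqP -> /eqP ->.
by rewrite imset_set1 disjoints_subset sub1set inE.
Qed.

Lemma match_U1 (V E : finType) (inc : E -> {set V}) (B : {set E}) f :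
  is_matching inc B -> (forall b, b \in B -> [disjoint inc f & inc b]) ->
  is_matching inc (f |: B).
Proof.
move=> hB hf; apply: match_union => //.
  by move=> x y; rewrite !inE => /eqP -> /eqP ->; rewrite eqxx.
by move=> a b; rewrite inE => /eqP -> hb; apply: hf.
Qed.

Theorem lemma1 (V E S : finType) (inc : E -> {set V})
  (indep : {set S} -> bool) (gamma : E -> S)
  (hne : forall e, inc e != set0)
  (hmat : is_matroid indep)
  (M : {set E})
  (hM : maximal_matching inc indep gamma [set: E] M)
  (he : exists e : E, gamma e \notin span indep (gamma @: M)) :
  exists (k : nat) (X : {set E}),
    [/\ 0 < k, #|X| = k.+1, connected_hg inc (Vof inc X) X &
        exists M' : {set E},
          maximal_matching inc indep gamma (del_edges inc (Vof inc X)) M' /\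
          #|M'| + k = #|M| ].
Proof.
case: he => e he.
pose cond P := indep_matching inc indep gamma [set: E] P /\
   span indep (gamma @: P) = span indep (gamma @: M).
have F1 : forall P, cond P -> incl_maximal inc indep gamma [set: E] P.
  by move=> P [h1 h2]; apply: hM.2.
have F2 : forall P, cond P -> #|P| = #|M|.
  move=> P [[_ _ hiP hP] hsp]; case: hM => [[_ _ hiM hMi] _].
  rewrite -(card_in_imset hiP) -(card_in_imset hiM).
  apply/eqP; rewrite eqn_leq; apply/andP; split.
  - apply: (card_le_span hmat hMi hP); apply/subsetP => x hx; rewrite -hsp.
    exact: span_sub.
  - apply: (card_le_span hmat hP hMi); apply/subsetP => x hx; rewrite hsp.
    exact: span_sub.
pose hit (P : {set E}) := [set p in P | ~~ [disjoint inc p & inc e]].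
suff main : forall n P, cond P -> #|hit P| < n ->
  exists (k : nat) (X : {set E}),
    [/\ 0 < k, #|X| = k.+1, connected_hg inc (Vof inc X) X &
        exists M' : {set E},
          maximal_matching inc indep gamma (del_edges inc (Vof inc X)) M' /\
          #|M'| + k = #|M| ].
  apply: (main #|M|.+1 M); last first.
    by rewrite ltnS; apply: subset_leq_card; apply/subsetP => p; rewrite inE => /andP [].
  by split => //; exact: hM.1.
elim=> [|n IH] P hP //.
move=> hkn.
case: (hP) => [[_ hmP hiP hIP] hspP].
set X' := hit P.
case: (classic (exists2 P'', cond P'' & #|hit P''| < #|X'|)) => [[P'' hP'' hlt]|hmin].
  by apply: (IH P'' hP''); apply: (leq_trans hlt); rewrite -ltnS.
have hX'P : X' \subset P by apply/subsetP => p; rewrite inE => /andP [].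
have hX'e : forall x, x \in X' -> ~~ [disjoint inc x & inc e].
  by move=> x; rewrite inE => /andP [].
have heP : e \notin P.
  apply/negP => h; move: he; rewrite -hspP; apply/negP/negPn; apply: span_sub.
  exact: imset_f.
have heP' : gamma e \notin gamma @: P.
  by apply: contra he => h; rewrite -hspP; apply: span_sub.
have hk0 : 0 < #|X'|.
  rewrite card_gt0; apply/negP => /eqP hX0.
  case: (F1 P hP) => _ /(_ (e |: P)); apply.
  - split.
    + exact: subsetT.
    + move=> a b; rewrite !in_setU1 => /orP [/eqP ->|ha] /orP [/eqP ->|hb] hab.
      * by rewrite eqxx in hab.
      * apply/negPn/negP => hd; have : b \in X' by rewrite inE hb /= disjoint_sym.
        by rewrite hX0 inE.
      * apply/negPn/negP => hd; have : a \in X' by rewrite inE ha.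
        by rewrite hX0 inE.
      * exact: hmP.
    + apply: (inj_union (A := [set e])) => //.
      * by move=> x y; rewrite !inE => /eqP -> /eqP ->.
      * by rewrite imset_set1 disjoints_subset sub1set inE heP'.
    + rewrite imsetU1; have := @notspan_indep _ _ hmat _ (gamma e) hIP.
      by rewrite hspP => /(_ he) /andP [].
  - apply/properP; split; first exact: subsetUr.
    by exists e; rewrite ?in_setU1 ?eqxx.
set X := e |: X'.
set D := del_edges inc (Vof inc X).
have hXc : #|X| = #|X'|.+1.
  have heX' : e \notin X' by apply: contra heP; apply: (subsetP hX'P).
  by rewrite cardsU1 heX'.
have incD : forall d x, d \in D -> x \in X -> [disjoint inc d & inc x].
  move=> d x; rewrite inE => hd hx; apply: (disjointWr _ hd).
  exact: (bigcup_sup x hx).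
have DnX : forall d, d \in D -> d \notin X.
  move=> d hd; apply/negP => hdX; have := incD _ _ hd hdX.
  rewrite -setI_eq0 setIid; apply/negP; exact: hne.
set M0 := P :\: X'.
have hM0P : M0 \subset P by apply: subsetDl.
have hM0D : M0 \subset D.
  apply/subsetP => p; rewrite inE => /andP [hpX' hpP]; rewrite inE /Vof.
  apply: bigcup_disjoint => x; rewrite in_setU1 => /orP [/eqP ->|hx].
    by move: hpX'; rewrite inE hpP /= negbK.
  apply: hmP => //; first exact: (subsetP hX'P).
  by apply/negP => /eqP hpx; move: hpX'; rewrite hpx hx.
have hPU : P = M0 :|: X'.
  apply/setP => p; rewrite in_setU in_setD.
  by case: (boolP (p \in X')) => hp; rewrite ?orbT ?orbF ?andbT ?(subsetP hX'P _ hp).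
exists #|X'|, X; split => //.
  exact: conn_star.
exists M0; split; last first.
  by rewrite -(F2 P hP) -(cardsID X' P) (setIidPr hX'P) addnC.
have hM0m : indep_matching inc indep gamma D M0.
  split => //.
  - by move=> a b ha hb; apply: hmP; apply: (subsetP hM0P).
  - exact: inj_sub hM0P hiP.
  - exact: (hered hmat (imsetS gamma hM0P) hIP).
split => // N [hND hmN hiN hIN] hspN; split; first by split.
move=> N' [hN'D hmN' hiN' hIN'] /properP [hNN' [f hfN' hfN]].
have hfD : f \in D by apply: (subsetP hN'D).
have hX'X : X' \subset X by apply: subsetUr.
have heX : e \in X by rewrite in_setU1 eqxx.
set Q := N :|: X'.
have hIM0 : indep (gamma @: M0) by apply: (hered hmat (imsetS gamma hM0P) hIP).
have hdisM0 : [disjoint gamma @: M0 & gamma @: X'].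
  rewrite -setI_eq0; apply/eqP/setP => z; rewrite in_setI in_set0.
  apply/negP => /andP [/imsetP [a ha ->] /imsetP [b hb hab]].
  have hab' : a = b.
    by apply: hiP hab; [apply: (subsetP hM0P) | apply: (subsetP hX'P)].
  by move: ha; rewrite in_setD hab' hb.
have hIU : indep (gamma @: M0 :|: gamma @: X') by rewrite -imsetU -hPU.
have [hIQ hdisNX hspQ] := span_union hmat hIM0 hIN (esym hspN) (leqnn #|gamma @: X'|) hIU hdisM0.
have hgQ : gamma @: Q = gamma @: N :|: gamma @: X' by rewrite imsetU.
have hIQ' : indep (gamma @: Q) by rewrite hgQ.
have hspQM : span indep (gamma @: Q) = span indep (gamma @: M).
  by rewrite hgQ -hspQ -imsetU -hPU hspP.
have hmQ : is_matching inc Q.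
  apply: match_union => //; first exact: (match_sub hX'P hmP).
  by move=> a b ha hb; apply: incD; [apply: (subsetP hND) | apply: (subsetP hX'X)].
have hiQ : {in Q &, injective gamma} by apply: inj_union => //; exact: (inj_sub hX'P hiP).
have hcQ : cond Q by split => //; split => //; exact: subsetT.
have hfNsub : f |: N \subset N' by rewrite subUset sub1set hfN' hNN'.
have hgfN : gamma f \notin gamma @: N.
  apply/negP => /imsetP [n0 hn hfn]; have hfn' : f = n0.
    by apply: hiN' hfn => //; apply: (subsetP hNN').
  by move: hfN; rewrite hfn' hn.
have hfNi : indep (gamma f |: gamma @: N).
  by rewrite -imsetU1; apply: (hered hmat (imsetS gamma hfNsub) hIN').
have hfspN : gamma f \notin span indep (gamma @: N).
  by rewrite (spanP hmat _ hIN) negb_or hgfN hfNi.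
have hfQ : f \notin Q.
  rewrite in_setU negb_or hfN /=; apply: contra (DnX _ hfD); exact: (subsetP hX'X).
have hfdisQ : forall b, b \in Q -> [disjoint inc f & inc b].
  move=> b; rewrite in_setU => /orP [hb|hb].
    apply: hmN' => //; first by apply: (subsetP hNN').
    by apply/negP => /eqP hfb; move: hfN; rewrite hfb hb.
  by apply: incD => //; apply: (subsetP hX'X).
have hmfQ : is_matching inc (f |: Q) by apply: match_U1.
case: (boolP (gamma f \in span indep (gamma @: Q))) => hin; last first.
  case/andP: (notspan_indep hmat hIQ' hin) => hfgQ hfgQi.
  case: (F1 Q hcQ) => _ /(_ (f |: Q)); apply.
  - split; [exact: subsetT | exact: hmfQ | exact: inj_U1 | by rewrite imsetU1].
  - by apply/properP; split; [exact: subsetUr | exists f; rewrite ?in_setU1 ?eqxx].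
have hNQ : gamma @: N \subset gamma @: Q by apply: imsetS; apply: subsetUl.
have [z [hzQ hzN hindz hyz]] := exch_circ hmat hIQ' hNQ hin hfspN.
case/imsetP: (hzQ) => g hgQm hzg.
have hgX' : g \in X'.
  move: hgQm; rewrite in_setU => /orP [hgN|//].
  by move: hzN; rewrite hzg imset_f.
set P2 := f |: (Q :\ g).
have hgP2 : gamma @: P2 = gamma f |: (gamma @: Q :\ z).
  by rewrite imsetU1 hzg imset_D1_inj.
have hIP2 : indep (gamma @: P2) by rewrite hgP2.
have hspP2 : span indep (gamma @: Q) = span indep (gamma @: P2).
  apply: (span_eq hmat hIQ' hIP2).
    rewrite hgP2; apply/subsetP => w; rewrite in_setU1 => /orP [/eqP ->//|hw].
    by apply: span_sub; move: hw; rewrite in_setD1 => /andP [].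
  by rewrite hgP2 cardsU1 hyz (cardsD1 z (gamma @: Q)) hzQ.
have hcP2 : cond P2.
  split; last by rewrite -hspP2.
  split.
  - exact: subsetT.
  - apply: (match_sub _ hmfQ); apply: setUS; apply: subsetDl.
  - apply: inj_U1; first by apply: (inj_sub _ hiQ); apply: subsetDl.
    by rewrite imset_D1_inj // -hzg.
  - exact: hIP2.
apply: hmin; exists P2 => //.
have hsubh : hit P2 \subset X' :\ g.
  apply/subsetP => p; rewrite inE => /andP [hp hpe].
  move: hp; rewrite in_setU1 => /orP [/eqP hpf|].
    by move: hpe; rewrite hpf (incD _ _ hfD heX).
  rewrite in_setD1 => /andP [hpg]; rewrite in_setU => /orP [hpN|hpX].
    by move: hpe; rewrite (incD _ _ (subsetP hND _ hpN) heX).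
  by rewrite in_setD1 hpg hpX.
apply: (leq_trans (n := #|X' :\ g|.+1)); first by rewrite ltnS subset_leq_card.
by rewrite (cardsD1 g X') hgX'.
Qed.
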